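(* Let $k\ge1$ and $A,B\in SL(k,\mathbb Z)$. If $S_A$ is of diagonal type and $S_B$ is of non-diagonal type, then $S_A$ is not isomorphic to $S_B$.
   Context: For $A\in SL(k,\mathbb Z)$, $S_A$ denotes the semi-direct product $\mathbb Z\ltimes\mathbb Z^k$ associated with the action of $\mathbb Z$ on $\mathbb Z^k$ given by $m\circ x=A^m x$. $S_A$ is said to be of diagonal type if $A$ is diagonalizable over $\mathbb C$ and all its eigenvalues are different from $1$; it is of non-diagonal type if $A$ is not diagonalizable over $\mathbb C$ and all its eigenvalues are different from $1$. *)

(* Defs.v *)
From HB Require Import structures.
From mathcomp Require Import all_boot all_order all_algebra all_field.
Set Implicit Arguments. Unset Strict Implicit. Unset Printing Implicit Defensive.
Import Order.TTheory GRing.Theory Num.Theory.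
Local Open Scope ring_scope.

Definition SLZ (k : nat) (A : 'M[int]_k) : Prop := \det A = 1.

(* integer powers A^m, m in Z (A^-1 = invmx A, a genuine inverse when det A = 1) *)
Definition mxzpow (k : nat) (A : 'M[int]_k) (m : int) : 'M[int]_k :=
  match m with
  | Posz n => A ^+ n
  | Negz n => (invmx A) ^+ n.+1
  end.

Definition SA_carrier (k : nat) : Type := (int * 'cV[int]_k)%type.

Definition SA_mul (k : nat) (A : 'M[int]_k) (g h : SA_carrier k) : SA_carrier k :=
  (g.1 + h.1, g.2 + mxzpow A g.1 *m h.2).

Definition SA_isomorphic (k : nat) (A B : 'M[int]_k) : Prop :=
  exists f : SA_carrier k -> SA_carrier k,
    bijective f /\ forall g h, f (SA_mul A g h) = SA_mul B (f g) (f h).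

Definition mxC (k : nat) (A : 'M[int]_k) : 'M[algC]_k := map_mx intr A.

Definition diagonal_type (k : nat) (A : 'M[int]_k) : Prop :=
  diagonalizable (mxC A) /\ forall a : algC, eigenvalue (mxC A) a -> a != 1.

Definition non_diagonal_type (k : nat) (A : 'M[int]_k) : Prop :=
  ~ diagonalizable (mxC A) /\ forall a : algC, eigenvalue (mxC A) a -> a != 1.

(* Main.v *)
Require Import Defs.
From mathcomp Require Import all_boot all_order all_algebra all_field.
Set Implicit Arguments. Unset Strict Implicit. Unset Printing Implicit Defensive.
Import Order.TTheory GRing.Theory Num.Theory.
Local Open Scope ring_scope.

Lemma int_eq1 (a b : int) : a * b = 1 -> b = 1 \/ b = -1.
Proof. by move=> /intUnitRing.unitzPl; rewrite qualifE => /orP[/eqP|/eqP]; [left|right]. Qed.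

Lemma addf_zhom (V W : zmodType) (f : V -> W) :
  (forall x y, f (x + y) = f x + f y) -> forall x (c : int), f (x *~ c) = f x *~ c.
Proof.
move=> fD.
have f0 : f 0 = 0.
  have h := fD 0 0; rewrite addr0 in h.
  by apply: (addrI (f 0)); rewrite addr0 -h.
have fN x : f (- x) = - f x.
  by apply: (addrI (f x)); rewrite -fD !subrr.
have fn x (n : nat) : f (x *+ n) = f x *+ n.
  by elim: n => [|n IH]; rewrite ?mulr0n // !mulrS fD IH.
move=> x [n|n]; first by rewrite -!pmulrn fn.
by rewrite NegzE !mulrNz fN -!pmulrn fn.
Qed.

Lemma additive_mx (m : nat) (psi : 'cV[int]_m -> 'cV[int]_m) :
  (forall x y, psi (x + y) = psi x + psi y) ->
  exists P : 'M[int]_m, forall x, psi x = P *m x.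
Proof.
move=> fD.
have f0 : psi 0 = 0.
  have h := fD 0 0; rewrite addr0 in h.
  by apply: (addrI (psi 0)); rewrite addr0 -h.
exists (\matrix_(i, j) (psi (delta_mx j 0)) i 0) => x.
rewrite {1}(matrix_sum_delta x).
rewrite (big_morph psi fD f0).
apply/matrixP => i j; rewrite (ord1 j) !mxE summxE; apply: eq_bigr => l _.
rewrite big_ord1.
rewrite -[x l ord0]intz scaler_int (addf_zhom fD) -scaler_int intz !mxE mulrC.
by [].
Qed.

Lemma mul1mx' (m : nat) (y : 'cV[int]_m.+1) : (1 : 'M[int]_m.+1) *m y = y.
Proof. exact: mul1mx. Qed.

Lemma hom_first0 (n : nat) (A B : 'M[int]_n.+1) (f : SA_carrier n.+1 -> SA_carrier n.+1) :
  (forall g h, f (SA_mul A g h) = SA_mul B (f g) (f h)) -> \det (A - 1) != 0 ->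
  forall x, (f (0, x)).1 = 0.
Proof.
move=> fM hd.
have chiM g h : (f (SA_mul A g h)).1 = (f g).1 + (f h).1 by rewrite fM.
pose c0 x := (f (0, x)).1.
have c0D x y : c0 (x + y) = c0 x + c0 y.
  by rewrite /c0 -chiM /SA_mul /mxzpow /= addr0 expr0 mul1mx.
have c0A y : c0 (A *m y) = c0 y.
  have e : SA_mul A (1,0) (0,y) = SA_mul A (0, A *m y) (1,0).
    by rewrite /SA_mul /mxzpow /= expr1 expr0 mulmx0 !addr0 add0r.
  have := congr1 (fun g => (f g).1) e; rewrite /= !chiM -/(c0 y) -/(c0 (A *m y)).
  by move=> h; apply: (addrI (f (1,0)).1); rewrite h addrC.
move=> x.
have hz := addf_zhom c0D.
have hN y : c0 (- y) = - c0 y.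
  by rewrite -scaleN1r -[-1]intz scaler_int hz mulrN1z.
have e : x *~ \det (A - 1) = A *m (\adj (A - 1) *m x) - \adj (A - 1) *m x.
  by rewrite -scaler_int intz -mul_scalar_mx -mul_mx_adj mulmxA mulmxBl mul1mx mulmxBl.
have : c0 (x *~ \det (A - 1)) = 0 by rewrite e c0D hN c0A subrr.
rewrite hz mulrzz => /eqP; rewrite mulf_eq0 (negbTE hd) orbF => /eqP.
by [].
Qed.

Section Diag.
Variable F : fieldType.
Variable n : nat.

Lemma invmxM' (X Y : 'M[F]_n) : X \in unitmx -> Y \in unitmx ->
  invmx (X *m Y) = invmx Y *m invmx X.
Proof.
move=> Xu Yu.
have h : X *m Y *m (invmx Y *m invmx X) = 1%:M.
  by rewrite -mulmxA (mulmxA Y) mulmxV // mul1mx mulmxV.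
rewrite -[invmx (X *m Y)]mulmx1 -h mulmxA mulVmx ?mul1mx // unitmx_mul Xu Yu //=.

Qed.

Lemma diag_inv_diag (D : 'M[F]_n) : is_diag_mx D -> D \in unitmx -> is_diag_mx (invmx D).
Proof.
move=> /diag_mxP [d ->] Du; apply/is_diag_mxP => i j nij.
have h := mulmxV Du.
have e k l : d 0 k * invmx (diag_mx d) k l = (k == l)%:R.
  by have := congr1 (fun M : 'M[F]_n => M k l) h; rewrite /= mul_diag_mx !mxE.
have := e i j; have := e i i; rewrite eqxx.
have -> : (i == j) = false by apply/negP => /eqP ij; rewrite ij eqxx in nij.
move=> h1 /eqP; rewrite mulf_eq0 => /orP [/eqP d0|/eqP //].
by move: h1; rewrite d0 mul0r => /eqP; rewrite eq_sym oner_eq0.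
Qed.

Lemma diag_transfer (N M P : 'M[F]_n) : diagonalizable M -> P \in unitmx ->
  N *m P = P *m M -> diagonalizable N.
Proof.
move=> [R Ru hD] Pu e.
have RPu : R *m invmx P \in unitmx by rewrite unitmx_mul Ru unitmx_inv.
exists (R *m invmx P) => //.
move: hD; rewrite /similar_to !conjumx // invmxM' ?unitmx_inv // invmxK.
by rewrite !mulmxA -(mulmxA _ N) e mulmxA mulmxKV.
Qed.

Lemma diag_inv (M : 'M[F]_n) : diagonalizable M -> M \in unitmx ->
  diagonalizable (invmx M).
Proof.
move=> [R Ru hD] Mu; exists R => //.
move: hD; rewrite /similar_to !conjumx // => hD.
have -> : R *m invmx M *m invmx R = invmx (R *m M *m invmx R).
  by rewrite !invmxM' ?unitmx_mul ?unitmx_inv ?Ru ?Mu // invmxK mulmxA.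
by apply: diag_inv_diag => //; rewrite !unitmx_mul unitmx_inv Ru Mu.
Qed.
End Diag.

Lemma hom_psi (n : nat) (A B : 'M[int]_n.+1) (f : SA_carrier n.+1 -> SA_carrier n.+1) :
  (forall g h, f (SA_mul A g h) = SA_mul B (f g) (f h)) -> \det (A - 1) != 0 ->
  exists P : 'M[int]_n.+1, forall x, f (0, x) = (0, P *m x).
Proof.
move=> fM hd.
have h1 := hom_first0 fM hd.
have [P hP] : exists P : 'M[int]_n.+1, forall x, (f (0, x)).2 = P *m x.
  apply: additive_mx => x y.
  have -> : ((0 : int), x + y) = SA_mul A (0, x) (0, y).
    by rewrite /SA_mul /mxzpow /= addr0 expr0 mul1mx'.
  by rewrite fM /SA_mul /= (h1 x) /mxzpow /= expr0 mul1mx'.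
by exists P => x; rewrite -hP; move: (h1 x); case: (f (0, x)) => a b /= ->.
Qed.

Lemma det_ne0 (n : nat) (A : 'M[int]_n.+1) :
  (forall a : algC, eigenvalue (mxC A) a -> a != 1) -> \det (A - 1) != 0.
Proof.
move=> h.
have : ~~ eigenvalue (mxC A) 1 by apply/negP => /h; rewrite eqxx.
rewrite /eigenvalue /eigenspace negbK kermx_eq0 row_free_unit unitmxE unitfE.
by rewrite /mxC -(rmorph1 (intr : int -> algC)) -map_scalar_mx -map_mxB det_map_mx intr_eq0.
Qed.

Lemma mx_ext (m : nat) (M N : 'M[int]_m) : (forall x : 'cV_m, M *m x = N *m x) -> M = N.
Proof.
move=> h; apply/matrixP => i j.
have := congr1 (fun X : 'cV_m => X i 0) (h (delta_mx j 0)).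
by rewrite -!colE !mxE.
Qed.

Theorem corollary3p6 (k : nat) (A B : 'M[int]_k) :
  (1 <= k)%N -> SLZ A -> SLZ B ->
  diagonal_type A -> non_diagonal_type B ->
  ~ SA_isomorphic A B.
Proof.
case: k A B => [//|n] A B _ hA hB [dA eA] [ndB eB] [f [[g fg gf] fM]].
have gM u v : g (SA_mul B u v) = SA_mul A (g u) (g v).
  by rewrite -{1}(gf u) -{1}(gf v) -fM fg.
have hdA := det_ne0 eA.
have hdB := det_ne0 eB.
have [P hP] := hom_psi fM hdA.
have [Q hQ] := hom_psi gM hdB.
have PQ : P *m Q = 1%:M.
  apply: mx_ext => y; rewrite -mulmxA mul1mx.
  by have := gf (0, y); rewrite hQ hP => -[].
have Au : A \in unitmx by rewrite unitmxE hA unitr1.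
pose m := (f (1, 0)).1.
have chiM u v : (f (SA_mul A u v)).1 = (f u).1 + (f v).1 by rewrite fM.
have chiP (j : nat) : (f (j%:Z, 0)).1 = j%:Z * m.
  elim: j => [|j IH]; first by rewrite (hP 0) mul0r.
  have -> : ((j.+1)%:Z, (0 : 'cV[int]_n.+1)) = SA_mul A (j%:Z, 0) (1, 0).
    by rewrite /SA_mul /= mulmx0 addr0 -PoszD addn1.
  by rewrite chiM IH -/m -addn1 PoszD mulrDl mul1r.
have chiN (j : nat) : (f (Negz j, 0)).1 = - (j.+1%:Z * m).
  have e : SA_mul A (Negz j, 0) (j.+1%:Z, 0) = (0, 0).
    by rewrite /SA_mul /= mulmx0 addr0 NegzE addNr.
  have := congr1 (fun u => (f u).1) e; rewrite /= chiM chiP (hP 0) /=.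
  by move=> /eqP; rewrite addr_eq0 => /eqP.
have m1 : m = 1 \/ m = -1.
  case E: (g (1,0)) => [a w].
  have e : (a, w) = SA_mul A (0, w) (a, 0).
    by rewrite /SA_mul /mxzpow /= add0r mulmx0 addr0.
  have := congr1 (fun u => (f u).1) e; rewrite /= -E gf /= chiM (hP w) /=.
  case: a {E e} => j; rewrite ?chiP ?chiN add0r => h.
    by apply: (@int_eq1 j); rewrite -h.
  by apply: (@int_eq1 (- j.+1%:Z)); rewrite mulNr -h.
have Pu : mxC P \in unitmx.
  have : mxC P *m mxC Q = 1%:M by rewrite /mxC -map_mxM PQ map_mx1.
  by case/mulmx1_unit.
have Acu : mxC A \in unitmx by rewrite /mxC unitmxE det_map_mx hA rmorph1 unitr1.
apply: ndB.
case: m1 => hm.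
  have rel : B *m P = P *m A.
    apply: mx_ext => x.
    have e : SA_mul A (1,0) (0,x) = SA_mul A (0, A *m x) (1,0).
      by rewrite /SA_mul /mxzpow /= expr1 expr0 mulmx0 !addr0 add0r.
    have := congr1 (fun u => (f u).2) e; rewrite /= !fM !hP /SA_mul /=.
    rewrite -/m hm /mxzpow /= expr1 expr0 mul1mx' addrC => /addIr.
    by rewrite !mulmxA.
  apply: (diag_transfer dA Pu).
  by rewrite /mxC -!map_mxM rel.
have rel : B *m P *m A = P.
  apply: mx_ext => x.
  have e : SA_mul A (-1,0) (0, A *m x) = SA_mul A (0,x) (-1,0).
    by rewrite /SA_mul /mxzpow /= addr0 add0r expr1 mulKmx // mulmx0 addr0.
  have f1 : (f (Negz 0, 0)).1 = 1 by rewrite chiN hm mul1r opprK.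
  have := congr1 (fun u => (f u).2) e; rewrite /= !fM !hP /SA_mul /=.
  rewrite f1 /mxzpow /= expr1 expr0 mul1mx' addrC => /addIr.
  by rewrite !mulmxA.
apply: (diag_transfer (diag_inv dA Acu) Pu).
by rewrite -[in RHS]rel /mxC !map_mxM mulmxK.
Qed.
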